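(* Let $(V,c)$ be a network and $\Omega\subset V$ a finite subset of size $n$. Let $(\lambda_i,u_i)_{i=1}^n$ be a Dirichlet system for $\Omega$. Then for any $k<n$ and any function $\alpha:V\to\mathbb{R}$, $$\sum_{i=1}^k(\lambda_{k+1}-\lambda_i)^2\Big(\langle\Gamma(\alpha),u_i^2\rangle-\Lambda(\alpha,u_i)\Big)\le\sum_{i=1}^k(\lambda_{k+1}-\lambda_i)\,\big\|u_i\cdot\Delta\alpha-2\Gamma(\alpha,u_i)\big\|^2.$$
   Context: A network is a pair $(V,c)$ with $V$ countable and $c:V\times V\to[0,\infty)$ symmetric with $\pi(x):=\sum_y c(x,y)<\infty$. Set $P(x,y)=c(x,y)/\pi(x)$, $\Delta f(x)=\sum_yP(x,y)(f(x)-f(y))$, $\langle f,g\rangle=\sum_x\pi(x)f(x)\overline{g(x)}$ and $\|f\|^2=\langle f,f\rangle$. Define $2\Gamma(f,g)(x)=\sum_yP(x,y)(f(x)-f(y))\overline{(g(x)-g(y))}$, $\Gamma(f)=\Gamma(f,f)$, and $\Lambda(f,g)=\frac14\sum_{x,y}c(x,y)|f(x)-f(y)|^2|g(x)-g(y)|^2$. For finite $\Omega\subset V$ with $|\Omega|=n$, let $L^2(\Omega)$ be the functions vanishing outside $\Omega$ and $\Delta_\Omega f=\mathbf 1_\Omega\cdot\Delta f$ the Dirichlet Laplacian on $L^2(\Omega)$. A Dirichlet system for $\Omega$ is a collection $(\lambda_i,u_i)_{i=1}^n$ with $\lambda_1\le\cdots\le\lambda_n$ the eigenvalues of $\Delta_\Omega$,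 $u_i$ real-valued, vanishing outside $\Omega$, $\Delta_\Omega u_i=\lambda_iu_i$, and $\langle u_i,u_j\rangle=\mathbf 1_{i=j}$. *)

(* Defs.v *)
From HB Require Import structures.
From mathcomp Require Import all_boot all_order all_algebra finmap.
From mathcomp Require Import all_classical all_reals all_analysis.
Set Implicit Arguments. Unset Strict Implicit. Unset Printing Implicit Defensive.
Import Order.TTheory GRing.Theory Num.Theory.
Local Open Scope classical_set_scope.
Local Open Scope ring_scope.

Section Network.
Variables (R : realType) (V : countType).

(* Equals the usual (unordered) sum when the family is absolutely summable. *)
Definition vsum (T : choiceType) (f : T -> R) : R :=
  fine (\esum_(x in [set: T]) (Num.max (f x) 0)%:E) -
  fine (\esum_(x in [set: T]) (Num.max (- f x) 0)%:E).

Definition is_network (c : V -> V -> R) : Prop :=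
  (forall x y, 0 <= c x y) /\ (forall x y, c x y = c y x) /\
  (forall x, summable [set: V] (fun y => (c x y)%:E)).

Variable c : V -> V -> R.

Definition npi (x : V) : R := vsum (c x).
Definition P (x y : V) : R := c x y / npi x.

Definition Lap (f : V -> R) (x : V) : R := vsum (fun y => P x y * (f x - f y)).

Definition Gam2 (f g : V -> R) (x : V) : R :=
  vsum (fun y => P x y * (f x - f y) * (g x - g y)) / 2.
Definition Gam (f : V -> R) := Gam2 f f.

Definition inner (f g : V -> R) : R := vsum (fun x => npi x * f x * g x).
Definition norm2 (f : V -> R) : R := inner f f.

Definition Lam (f g : V -> R) : R :=
  vsum (fun p : V * V => c p.1 p.2 * (f p.1 - f p.2) ^+ 2 * (g p.1 - g p.2) ^+ 2) / 4.

(* Dirichlet system for Omega (|Omega| = n), indexed 0..n-1 *)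
Definition dirichlet_system (Omega : {fset V}) (lam : nat -> R) (u : nat -> V -> R) : Prop :=
  let n := #|` Omega| in
  (forall i j, (i <= j < n)%N -> lam i <= lam j) /\
  (forall i, (i < n)%N -> forall x, x \notin Omega -> u i x = 0) /\
  (forall i, (i < n)%N -> forall x, x \in Omega -> Lap (u i) x = lam i * u i x) /\
  (forall i j, (i < n)%N -> (j < n)%N -> inner (u i) (u j) = (i == j)%:R).

End Network.

(* Main.v *)
Require Import Defs.
From HB Require Import structures.
From mathcomp Require Import all_boot all_order all_algebra finmap.
From mathcomp Require Import all_classical all_reals all_analysis.
From mathcomp Require Import lra ring.
Import Order.TTheory GRing.Theory Num.Theory.
Local Open Scope classical_set_scope.
Local Open Scope ring_scope.

Section VsumTheory.
Variables (R : realType) (T : choiceType).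
Implicit Types (f g h : T -> R).

Definition sm f := summable [set: T] (fun x => (f x)%:E).

Lemma esum_fin_supp (F : T -> \bar R) (s : seq T) : uniq s ->
  (forall x, (0 <= F x)%E) -> (forall x, x \notin s -> F x = 0%E) ->
  \esum_(x in [set: T]) F x = \sum_(x <- s) F x.
Proof.
move=> us F0 Fs.
rewrite (esumID [set` s]) //.
rewrite [X in (_ + X)%E]esum1 ?adde0; last first.
  by move=> x [_ /= xs]; rewrite Fs //; apply/negP.
by rewrite setTI esum_fset // [RHS]fsbig_seq.
Qed.

Lemma esum_ge0T (F : T -> \bar R) : (forall x, (0 <= F x)%E) -> (0 <= \esum_(x in [set: T]) F x)%E.
Proof. by move=> F0; apply: esum_ge0 => x _; exact: F0. Qed.

Lemma vsum_nneg f : (forall x, 0 <= f x) ->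
  vsum f = fine (\esum_(x in [set: T]) (f x)%:E).
Proof.
move=> f0; rewrite /vsum.
rewrite (@eq_esum _ _ _ _ (fun x => (f x)%:E)); last first.
  by move=> x _; rewrite max_l.
rewrite (@esum1 _ _ _ (fun x => (Num.max (- f x) 0)%:E)) ?subr0 //.
by move=> x _; rewrite max_r // lerNl oppr0.
Qed.

Lemma sm_nneg f : (forall x, 0 <= f x) -> sm f ->
  \esum_(x in [set: T]) (f x)%:E = (fine (\esum_(x in [set: T]) (f x)%:E))%:E.
Proof.
move=> f0 sf; rewrite fineK //.
move: sf; rewrite /sm summableE.
by rewrite (@eq_esum _ _ _ _ (fun x => (f x)%:E)) // => x _; rewrite gee0_abs // lee_fin.
Qed.

Lemma sm_le f g : (forall x, `|f x| <= g x) -> sm g -> sm f.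
Proof.
move=> fg; rewrite /sm /summable => /(le_lt_trans _); apply.
apply: le_esum => x _ /=.
have g0 : 0 <= g x by apply: le_trans (fg x).
by rewrite /= lee_fin (ger0_norm g0).
Qed.

Lemma smD f g : sm f -> sm g -> sm (fun x => f x + g x).
Proof.
move=> sf sg; rewrite /sm /summable; under eq_esum do rewrite EFinD.
exact: (summableD sf sg).
Qed.

Lemma sm_abs f : sm f -> sm (fun x => `|f x|).
Proof.
rewrite /sm /summable => H; apply: le_lt_trans H; apply: le_esum => x _ /=.
by rewrite normr_id.
Qed.

Lemma sm_fin f (s : seq T) : (forall x, x \notin s -> f x = 0) -> sm f.
Proof.
move=> fs; rewrite /sm /summable.
rewrite (@esum_fin_supp _ (undup s) (undup_uniq s)) //; last first.
  by move=> x; rewrite mem_undup => /fs ->; rewrite abse0.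
rewrite -[X in (X < _)%E]/(\sum_(x <- undup s) (`|f x|)%:E)%E.
by rewrite sumEFin ltry.
Qed.

Lemma esumZ (r : R) (F : T -> R) : 0 <= r -> (forall x, 0 <= F x) ->
  \esum_(x in [set: T]) (r * F x)%:E = (r%:E * \esum_(x in [set: T]) (F x)%:E)%E.
Proof.
move=> r0 F0; have [->|rpos] := eqVneq r 0.
  rewrite mul0e esum1 // => x _; by rewrite mul0r.
have r_gt0 : 0 < r by rewrite lt0r rpos.
rewrite /esum -ereal_sup_pZl //; congr ereal_sup.
apply/seteqP; split => y /=.
  move=> [A [finA _] <-]; exists (\sum_(x \in A) (F x)%:E)%E; first by exists A.
  by rewrite !fsumEFin // -EFinM mulr_fsumr.
move=> [z [A [finA _] <-] <-]; exists A => //.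
by rewrite !fsumEFin // -EFinM mulr_fsumr.
Qed.

Lemma smZ (a : R) f : sm f -> sm (fun x => a * f x).
Proof.
move=> sf; rewrite /sm /summable.
rewrite -[X in (X < _)%E]/(\esum_(x in [set: T]) (`|a * f x|)%:E)%E.
under eq_esum do rewrite normrM.
rewrite esumZ //.
move: sf; rewrite /sm summableE.
rewrite -[X in X \is a fin_num -> _]/(\esum_(x in [set: T]) (`|f x|)%:E)%E.
by move=> /fineK <-; rewrite -EFinM ltry.
Qed.

Lemma smN f : sm f -> sm (fun x => - f x).
Proof. by move=> /(smZ (-1)); under eq_fun do rewrite mulN1r. Qed.

Lemma smB f g : sm f -> sm g -> sm (fun x => f x - g x).
Proof. by move=> sf /smN; exact: smD. Qed.

Lemma esumD_real g h : (forall x, 0 <= g x) -> (forall x, 0 <= h x) ->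
  \esum_(x in [set: T]) (g x + h x)%:E =
  (\esum_(x in [set: T]) (g x)%:E + \esum_(x in [set: T]) (h x)%:E)%E.
Proof.
move=> g0 h0; under eq_esum do rewrite EFinD.
by rewrite esumD // => x _; rewrite lee_fin.
Qed.

Definition fsum g := fine (\esum_(x in [set: T]) (g x)%:E).

Lemma fsumD g h : (forall x, 0 <= g x) -> (forall x, 0 <= h x) -> sm g -> sm h ->
  fsum (fun x => g x + h x) = fsum g + fsum h.
Proof.
move=> g0 h0 sg sh; rewrite /fsum esumD_real // (sm_nneg _ g0 sg) (sm_nneg _ h0 sh).
by rewrite -EFinD.
Qed.

Lemma vsum_diff f g h : (forall x, 0 <= g x) -> (forall x, 0 <= h x) ->
  sm g -> sm h -> (forall x, f x = g x - h x) -> vsum f = fsum g - fsum h.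
Proof.
move=> g0 h0 sg sh fE.
set p := fun x => Num.max (f x) 0; set q := fun x => Num.max (- f x) 0.
have p0 x : 0 <= p x by rewrite /p le_max lexx orbT.
have q0 x : 0 <= q x by rewrite /q le_max lexx orbT.
have pq x : p x + h x = q x + g x.
  rewrite /p /q fE; case: (leP 0 (g x - h x)) => H.
    by rewrite max_r; lra.
  by rewrite max_l; lra.
have sgh : sm (fun x => g x + h x) by exact: smD.
have sp : sm p.
  apply: sm_le sgh => x; rewrite ger0_norm // /p fE.
  by have := g0 x; have := h0 x; rewrite ge_max; move=> *; apply/andP; split; lra.
have sq : sm q.
  apply: sm_le sgh => x; rewrite ger0_norm // /q fE.
  by have := g0 x; have := h0 x; rewrite ge_max; move=> *; apply/andP; split; lra.
have := fsumD _ _ p0 h0 sp sh; have := fsumD _ _ q0 g0 sq sg.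
rewrite (_ : (fun x => p x + h x) = (fun x => q x + g x)); last first.
  by apply: funext => x; rewrite pq.
move=> -> E; rewrite /vsum -/(fsum p) -/(fsum q).
lra.
Qed.

Definition pp f := fun x => Num.max (f x) 0.
Definition nn f := fun x => Num.max (- f x) 0.
Lemma pp0 f x : 0 <= pp f x. Proof. by rewrite /pp le_max lexx orbT. Qed.
Lemma nn0 f x : 0 <= nn f x. Proof. by rewrite /nn le_max lexx orbT. Qed.
Lemma ppnn f x : f x = pp f x - nn f x.
Proof. rewrite /pp /nn; case: (leP 0 (f x)) => H; [rewrite max_r | rewrite max_l]; lra. Qed.
Lemma sm_pp f : sm f -> sm (pp f).
Proof.
move=> /sm_abs; apply: sm_le => x; rewrite ger0_norm ?pp0 // /pp ge_max normr_ge0 andbT.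
exact: ler_norm.
Qed.
Lemma sm_nn f : sm f -> sm (nn f).
Proof.
move=> /sm_abs; apply: sm_le => x; rewrite ger0_norm ?nn0 // /nn ge_max normr_ge0 andbT.
by rewrite -normrN ler_norm.
Qed.
Lemma vsumE f : vsum f = fsum (pp f) - fsum (nn f).
Proof. by []. Qed.

Lemma vsumD f g : sm f -> sm g -> vsum (fun x => f x + g x) = vsum f + vsum g.
Proof.
move=> sf sg.
rewrite (@vsum_diff _ (fun x => pp f x + pp g x) (fun x => nn f x + nn g x)).
- rewrite !fsumD ?vsumE; try (by move=> x; rewrite ?pp0 ?nn0); try (by apply: sm_pp); try (by apply: sm_nn).
  lra.
- by move=> x; apply: addr_ge0; rewrite ?pp0.
- by move=> x; apply: addr_ge0; rewrite ?nn0.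
- by apply: smD; apply: sm_pp.
- by apply: smD; apply: sm_nn.
- by move=> x; rewrite (ppnn f x) (ppnn g x); lra.
Qed.

Lemma fsumZ (a : R) g : 0 <= a -> (forall x, 0 <= g x) -> fsum (fun x => a * g x) = a * fsum g.
Proof.
move=> a0 g0; rewrite /fsum esumZ //.
case: (\esum_(x in [set: T]) (g x)%:E) => [r| |] //=.
  have [->|anz] := eqVneq a 0; first by rewrite mul0e mul0r.
  by rewrite gt0_muley ?mulr0 // lte_fin lt0r anz.
have [->|anz] := eqVneq a 0; first by rewrite mul0e mul0r.
by rewrite gt0_muleNy ?mulr0 // lte_fin lt0r anz.
Qed.

Lemma vsumZ (a : R) f : sm f -> vsum (fun x => a * f x) = a * vsum f.
Proof.
move=> sf; case: (leP 0 a) => a0.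
  rewrite (@vsum_diff _ (fun x => a * pp f x) (fun x => a * nn f x)).
  - rewrite !fsumZ ?vsumE //; first by rewrite mulrBr.
      exact: nn0.
    exact: pp0.
  - by move=> x; apply: mulr_ge0; rewrite ?pp0.
  - by move=> x; apply: mulr_ge0; rewrite ?nn0.
  - by apply: smZ; apply: sm_pp.
  - by apply: smZ; apply: sm_nn.
  - by move=> x; rewrite (ppnn f x) mulrBr.
have a0' : 0 <= - a by rewrite oppr_ge0 ltW.
rewrite (@vsum_diff _ (fun x => (- a) * nn f x) (fun x => (- a) * pp f x)).
- rewrite !fsumZ ?vsumE //; first by ring.
    exact: pp0.
  exact: nn0.
- by move=> x; apply: mulr_ge0; rewrite ?nn0.
- by move=> x; apply: mulr_ge0; rewrite ?pp0.
- by apply: smZ; apply: sm_nn.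
- by apply: smZ; apply: sm_pp.
- by move=> x; rewrite (ppnn f x); ring.
Qed.

Lemma vsumN f : sm f -> vsum (fun x => - f x) = - vsum f.
Proof.
move=> sf; rewrite -mulN1r -(vsumZ (-1) _ sf).
by congr vsum; apply: funext => x; rewrite mulN1r.
Qed.

Lemma vsumB f g : sm f -> sm g -> vsum (fun x => f x - g x) = vsum f - vsum g.
Proof. by move=> sf sg; rewrite vsumD ?vsumN //; exact: smN. Qed.

Lemma vsum_nneg_fsum f : (forall x, 0 <= f x) -> vsum f = fsum f.
Proof. exact: vsum_nneg. Qed.

Lemma vsum_fin f (s : seq T) : uniq s -> (forall x, x \notin s -> f x = 0) ->
  vsum f = \sum_(x <- s) f x.
Proof.
move=> us fs; rewrite vsumE /fsum.
rewrite (@esum_fin_supp (fun x => (pp f x)%:E) s us); last 2 first.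
- by move=> x; rewrite lee_fin pp0.
- by move=> x /fs; rewrite /pp => ->; rewrite maxxx.
rewrite (@esum_fin_supp (fun x => (nn f x)%:E) s us); last 2 first.
- by move=> x; rewrite lee_fin nn0.
- by move=> x /fs; rewrite /nn => ->; rewrite oppr0 maxxx.
rewrite !sumEFin /= -sumrB; apply: eq_bigr => x _; by rewrite -ppnn.
Qed.

Lemma vsum_ge0 f : (forall x, 0 <= f x) -> 0 <= vsum f.
Proof.
move=> f0; rewrite vsum_nneg //; apply: fine_ge0; apply: esum_ge0T => x.
by rewrite lee_fin.
Qed.

Lemma vsum_ge_fin f (s : seq T) : uniq s -> (forall x, 0 <= f x) -> sm f ->
  \sum_(x <- s) f x <= vsum f.
Proof.
move=> us f0 sf; rewrite vsum_nneg //.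
rewrite -lee_fin (fineK _); last first.
  by move: (sm_nneg _ f0 sf) => ->.
have fE : forall x, (0 <= (f x)%:E)%E by move=> x; rewrite lee_fin.
rewrite (esumID [set` s]); last by move=> x _.
rewrite setTI esum_fset //.
rewrite -(@fsbig_seq _ _ _ _ s (fun i => (f i)%:E) us) sumEFin.
apply: leeDl; apply: esum_ge0 => x _; exact: fE.
Qed.

End VsumTheory.

Arguments sm {R T} f.
Arguments fsum {R T} g.
Arguments pp {R T} f x.
Arguments nn {R T} f x.

Lemma maxZ (R : realType) (a t : R) : 0 <= a -> Num.max (a * t) 0 = a * Num.max t 0.
Proof.
move=> a0; case: (leP 0 t) => H.
  by rewrite max_l // mulr_ge0.
by rewrite mulr0 max_r // mulr_ge0_le0 // ltW.
Qed.

Lemma vsumZ_nneg (R : realType) (T : choiceType) (a : R) (f : T -> R) : 0 <= a ->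
  vsum (fun x => a * f x) = a * vsum f.
Proof.
move=> a0; rewrite !vsumE.
have -> : pp (fun x => a * f x) = (fun x => a * pp f x).
  by apply: funext => x; rewrite /pp maxZ.
have -> : nn (fun x => a * f x) = (fun x => a * nn f x).
  by apply: funext => x; rewrite /nn -mulrN maxZ.
rewrite !fsumZ //; [by rewrite mulrBr | exact: nn0 | exact: pp0].
Qed.

Arguments sm_le {R T f g}. Arguments smD {R T f g}. Arguments smZ {R T} a {f}.
Arguments smB {R T f g}. Arguments smN {R T f}. Arguments sm_fin {R T f} s.
Arguments vsum_fin {R T f s}. Arguments vsumD {R T f g}. Arguments vsumZ {R T} a {f}.
Arguments vsumB {R T f g}. Arguments vsum_ge_fin {R T f s}. Arguments sm_nneg {R T f}.
Arguments vsum_nneg {R T f}. Arguments esum_fin_supp {R T F s}.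
Arguments vsum_ge0 {R T f}. Arguments fsumD {R T g h}. Arguments fsumZ {R T} a {g}.
Arguments sm_abs {R T f}. Arguments sm_pp {R T f}. Arguments sm_nn {R T f}.

Section Alg.
Variable R : realFieldType.

Lemma antisym_sum0 (k : nat) (h : nat -> nat -> R) :
  (forall i j, h i j = - h j i) ->
  \sum_(0 <= i < k) \sum_(0 <= j < k) h i j = 0.
Proof.
move=> hA; set S := (X in X = 0).
have : S = - S.
  rewrite {1}/S exchange_big_nat /S -sumrN; apply: eq_bigr => i _.
  rewrite -sumrN; apply: eq_bigr => j _; exact: hA.
move=> E; have : 2 * S = 0 by rewrite mulr2n mulrDl mul1r {1}E addNr.
by move/eqP; rewrite mulf_eq0 pnatr_eq0 /= => /eqP.
Qed.

Lemma alg_ineq (n k : nat) (lam : nat -> R) (a : nat -> nat -> R) :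
  (k < n)%N -> (forall i j, (i <= j < n)%N -> lam i <= lam j) ->
  (forall i j, a i j = a j i) ->
  \sum_(i < k) (lam k - lam i) ^+ 2 * \sum_(j < n) (lam j - lam i) * a i j ^+ 2
  <= \sum_(i < k) (lam k - lam i) * \sum_(j < n) (lam j - lam i) ^+ 2 * a i j ^+ 2.
Proof.
move=> kn lamS aS.
rewrite -subr_ge0 -sumrB.
set h := fun i j => a i j ^+ 2 * (lam k - lam i) * (lam j - lam i) * (lam j - lam k).
have -> : \sum_(i < k) ((lam k - lam i) * \sum_(j < n) (lam j - lam i) ^+ 2 * a i j ^+ 2 -
     (lam k - lam i) ^+ 2 * \sum_(j < n) (lam j - lam i) * a i j ^+ 2) =
   \sum_(0 <= i < k) (\sum_(0 <= j < k) h i j + \sum_(k <= j < n) h i j).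
  rewrite big_mkord; apply: eq_bigr => i _.
  rewrite -big_cat_nat ?leq0n ?(ltnW kn) // big_mkord !mulr_sumr -sumrB.
  by apply: eq_bigr => j _; rewrite /h; ring.
rewrite big_split /= antisym_sum0 ?add0r; last first.
  by move=> i j; rewrite /h aS; ring.
rewrite big_nat_cond; apply: sumr_ge0 => i /andP[/andP[_ ik] _].
rewrite big_nat_cond; apply: sumr_ge0 => j /andP[/andP[kj jn] _].
rewrite /h; apply: mulr_ge0; [apply: mulr_ge0; [apply: mulr_ge0|]|].
- exact: sqr_ge0.
- by rewrite subr_ge0; apply: lamS; rewrite (ltnW ik) kn.
- by rewrite subr_ge0; apply: lamS; rewrite (leq_trans (ltnW ik) kj) jn.
- by rewrite subr_ge0; apply: lamS; rewrite kj jn.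
Qed.

End Alg.

Section Complete.
Variables (R : realFieldType) (V : eqType).

Lemma sum_seq_ord (s : seq V) (x0 : V) (F : V -> R) :
  \sum_(x <- s) F x = \sum_(m < size s) F (nth x0 s m).
Proof. by rewrite (big_nth x0) big_mkord. Qed.

Lemma complete_basis (s : seq V) (pi : V -> R) (u : nat -> V -> R) :
  (forall i j, (i < size s)%N -> (j < size s)%N ->
     \sum_(x <- s) pi x * u i x * u j x = (i == j)%:R) ->
  forall f x, x \in s ->
  f x = \sum_(j < size s) (\sum_(y <- s) pi y * f y * u j y) * u j x.
Proof.
move=> ON f x xs.
set n := size s.
pose e := fun m : 'I_n => nth x s m.
pose U : 'M[R]_n := \matrix_(j, m) u j (e m).
pose B : 'M[R]_n := \matrix_(m, j) (pi (e m) * u j (e m)).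
have UB : U *m B = 1%:M.
  apply/matrixP => i j; rewrite !mxE -(ON i j (ltn_ord i) (ltn_ord j)).
  rewrite (sum_seq_ord s x); apply: eq_bigr => m _; rewrite !mxE /e; ring.
have BU := mulmx1C UB.
have mx : (index x s < n)%N by rewrite index_mem.
pose m' := Ordinal mx.
have xE : x = e m' by rewrite /e /= nth_index.
rewrite xE.
transitivity (\sum_(m < n) f (e m) * (\sum_(j < n) pi (e m) * u j (e m) * u j (e m'))).
  rewrite [RHS](bigD1 m') //= [X in _ + X]big1 ?addr0.
    have := congr1 (fun M : 'M[R]_n => M m' m') BU; rewrite !mxE eqxx /=.
    under eq_bigr do rewrite !mxE.
    by move=> ->; rewrite mulr1.
  move=> m mm'.
  have := congr1 (fun M : 'M[R]_n => M m m') BU; rewrite !mxE (negPf mm') /=.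
  under eq_bigr do rewrite !mxE.
  by move=> ->; rewrite mulr0.
under eq_bigr do rewrite mulr_sumr.
rewrite exchange_big /=; apply: eq_bigr => j _.
rewrite (sum_seq_ord s x) mulr_suml; apply: eq_bigr => m _.
rewrite /e; ring.
Qed.

End Complete.

Section Core.
Variables (R : realFieldType) (V : eqType).

Lemma finite_core (s : seq V) (pi : V -> R) (C : V -> V -> R) (lam : nat -> R)
  (u w : nat -> V -> R) (alpha : V -> R) (k : nat) :
  (k < size s)%N ->
  (forall i j, (i <= j < size s)%N -> lam i <= lam j) ->
  (forall x y, C x y = C y x) ->
  (forall j x, (j < size s)%N -> x \in s ->
     \sum_(y <- s) C x y * u j y = (1 - lam j) * pi x * u j x) ->
  (forall i j, (i < size s)%N -> (j < size s)%N ->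
     \sum_(x <- s) pi x * u i x * u j x = (i == j)%:R) ->
  (forall i x, (i < size s)%N -> x \in s ->
     pi x * w i x = \sum_(y <- s) C x y * (alpha x - alpha y) * u i y) ->
  \sum_(i < k) (lam k - lam i) ^+ 2 *
     ((\sum_(x <- s) \sum_(y <- s) C x y * (alpha x - alpha y) ^+ 2 * u i x * u i y) / 2)
  <= \sum_(i < k) (lam k - lam i) * \sum_(x <- s) pi x * w i x * w i x.
Proof.
set n := size s.
move=> kn lamS Csym Eig ON Wdef.
have Comp := @complete_basis R V s pi u ON.
have Pars f g : \sum_(x <- s) pi x * f x * g x =
    \sum_(j < n) (\sum_(x <- s) pi x * f x * u j x) * (\sum_(x <- s) pi x * g x * u j x).
  rewrite big_seq; under eq_bigr => x xs do rewrite (Comp g x xs) mulr_sumr.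
  rewrite exchange_big /=; apply: eq_bigr => j _.
  rewrite [X in _ = X * _]big_seq mulr_suml; apply: eq_bigr => x _; ring.
pose a i j := \sum_(x <- s) pi x * (alpha x * u i x) * u j x.
have aS i j : a i j = a j i by apply: eq_bigr => x _; ring.
have Hb i j : (i < n)%N -> (j < n)%N ->
    \sum_(x <- s) pi x * w i x * u j x = (lam j - lam i) * a i j.
  move=> ilt jlt.
  transitivity (\sum_(x <- s) \sum_(y <- s) C x y * (alpha x - alpha y) * u i y * u j x).
    rewrite big_seq [RHS]big_seq; apply: eq_bigr => x xs.
    by rewrite (Wdef i x ilt xs) mulr_suml.
  transitivity (\sum_(x <- s) (alpha x * u j x) * (\sum_(y <- s) C x y * u i y)
       - \sum_(y <- s) (alpha y * u i y) * (\sum_(x <- s) C y x * u j x)).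
    rewrite [X in _ = _ - X](eq_bigr (fun y => \sum_(x <- s) alpha y * u i y * (C y x * u j x)));
      last by move=> y _; rewrite mulr_sumr.
    rewrite [X in _ = _ - X]exchange_big /= -sumrB; apply: eq_bigr => x _.
    rewrite mulr_sumr -sumrB; apply: eq_bigr => y _; rewrite (Csym y x); ring.
  rewrite big_seq [X in _ - X = _]big_seq.
  under eq_bigr => x xs do rewrite (Eig i x ilt xs).
  under [X in _ - X = _]eq_bigr => x xs do rewrite (Eig j x jlt xs).
  rewrite -!big_seq /a mulr_sumr -sumrB; apply: eq_bigr => x _; ring.
have HT i : (i < n)%N ->
    (\sum_(x <- s) \sum_(y <- s) C x y * (alpha x - alpha y) ^+ 2 * u i x * u i y) / 2
    = \sum_(j < n) (lam j - lam i) * a i j ^+ 2.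
  move=> ilt.
  set Q := \sum_(x <- s) \sum_(y <- s) C x y * (alpha x - alpha y) * u i y * (alpha x * u i x).
  have QE : \sum_(x <- s) pi x * w i x * (alpha x * u i x) = Q.
    rewrite big_seq [RHS]big_seq; apply: eq_bigr => x xs.
    by rewrite (Wdef i x ilt xs) mulr_suml.
  have Q' : Q = \sum_(x <- s) \sum_(y <- s) C x y * (alpha y - alpha x) * u i x * (alpha y * u i y).
    rewrite /Q exchange_big /=; apply: eq_bigr => x _; apply: eq_bigr => y _.
    by rewrite (Csym y x).
  have -> : \sum_(x <- s) \sum_(y <- s) C x y * (alpha x - alpha y) ^+ 2 * u i x * u i y = Q + Q.
    rewrite {1}Q' /Q -big_split /=; apply: eq_bigr => x _.
    rewrite -big_split /=; apply: eq_bigr => y _; ring.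
  rewrite -QE (Pars (fun x => w i x) (fun x => alpha x * u i x)).
  have -> : (\sum_(j < n) (\sum_(x <- s) pi x * w i x * u j x) *
       (\sum_(x <- s) pi x * (alpha x * u i x) * u j x)) =
       \sum_(j < n) (lam j - lam i) * a i j ^+ 2.
    by apply: eq_bigr => j _; rewrite Hb //; rewrite /a; ring.
  by move: (\sum_(j < n) _) => z; field.
have HN i : (i < n)%N ->
    \sum_(x <- s) pi x * w i x * w i x = \sum_(j < n) (lam j - lam i) ^+ 2 * a i j ^+ 2.
  move=> ilt; rewrite Pars; apply: eq_bigr => j _; rewrite Hb //; ring.
rewrite (eq_bigr (fun i : 'I_k => (lam k - lam i) ^+ 2 *
   \sum_(j < n) (lam j - lam i) * a i j ^+ 2)); last first.
  by move=> i _; rewrite HT // (ltn_trans (ltn_ord i) kn).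
rewrite [X in _ <= X](eq_bigr (fun i : 'I_k => (lam k - lam i) *
   \sum_(j < n) (lam j - lam i) ^+ 2 * a i j ^+ 2)); last first.
  by move=> i _; rewrite HN // (ltn_trans (ltn_ord i) kn).
exact: alg_ineq.
Qed.

End Core.

Lemma CS_seq (R : realFieldType) (T : Type) (r : seq T) (a z : T -> R) :
  (forall t, 0 <= a t) ->
  (\sum_(t <- r) a t * z t) ^+ 2 <= (\sum_(t <- r) a t) * (\sum_(t <- r) a t * z t ^+ 2).
Proof.
move=> a0; elim: r => [|t r IH]; first by rewrite !big_nil expr0n mul0r.
rewrite !big_cons.
move: IH; set A := \sum_(t <- r) a t * z t; set S := \sum_(t <- r) a t;
  set B := \sum_(t <- r) a t * z t ^+ 2 => IH.
have S0 : 0 <= S by apply: sumr_ge0 => i _.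
have B0 : 0 <= B by apply: sumr_ge0 => i _; apply: mulr_ge0 => //; exact: sqr_ge0.
have q0 : 0 <= S * z t ^+ 2 - 2 * z t * A + B.
  have [S0'|Spos] := eqVneq S 0.
    have A0 : A = 0.
      by apply/eqP; rewrite -sqrf_eq0 eq_le sqr_ge0 andbT; move: IH; rewrite S0' mul0r.
    by rewrite S0' A0; lra.
  have Sp : 0 < S by rewrite lt0r Spos.
  rewrite -(pmulr_rge0 _ Sp).
  have -> : S * (S * z t ^+ 2 - 2 * z t * A + B) = (S * z t - A) ^+ 2 + (S * B - A ^+ 2) by ring.
  by apply: addr_ge0; [exact: sqr_ge0 | lra].
have := mulr_ge0 (a0 t) q0.
have E : (a t + S) * (a t * z t ^+ 2 + B) - (a t * z t + A) ^+ 2 =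
   a t * (S * z t ^+ 2 - 2 * z t * A + B) + (S * B - A ^+ 2) by ring.
move: E; move: (a t * (S * z t ^+ 2 - 2 * z t * A + B)) => X E HX.
rewrite -subr_ge0 E; lra.
Qed.

Section Net.
Variables (R : realType) (V : countType) (c : V -> V -> R).
Hypothesis c0 : forall x y, 0 <= c x y.
Hypothesis csym : forall x y, c x y = c y x.
Hypothesis csm : forall x, sm (c x).
Variables (s : seq V) (alpha : V -> R).
Hypothesis us : uniq s.
Hypothesis ha : forall x, x \in s -> sm (fun y => c x y * (alpha x - alpha y) ^+ 2).

Lemma npi_ge0 x : 0 <= npi c x.
Proof. exact: vsum_ge0. Qed.

Lemma c_le_npi x y : c x y <= npi c x.
Proof.
have := @vsum_ge_fin R V (c x) [:: y] isT (c0 x) (csm x).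
by rewrite big_seq1.
Qed.

Lemma npiP x y : npi c x * P c x y = c x y.
Proof.
rewrite /P; have [E|nz] := eqVneq (npi c x) 0.
  have H := c_le_npi x y; rewrite E in H *; rewrite mul0r.
  by apply/eqP; rewrite eq_le H c0.
by rewrite mulrCA divff ?mulr1.
Qed.

Lemma vsum_Pscale x (g : V -> R) :
  npi c x * vsum (fun y => P c x y * g y) = vsum (fun y => c x y * g y).
Proof.
rewrite -vsumZ_nneg ?npi_ge0 //; congr vsum; apply: funext => y.
by rewrite mulrA npiP.
Qed.

Lemma sm_cd x : x \in s -> sm (fun y => c x y * (alpha x - alpha y)).
Proof.
move=> xs; apply: (sm_le _ (smD (csm x) (ha x xs))) => y.
rewrite normrM (ger0_norm (c0 x y)).
set d := alpha x - alpha y.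
have h : `|d| <= 1 + d ^+ 2.
  rewrite -(real_normK (num_real d)); have := normr_ge0 d; move: `|d| => t t0; nra.
have := c0 x y; move: (c x y) h => cc h c0'; nra.
Qed.

Lemma inner_fin (f g : V -> R) : (forall x, x \notin s -> g x = 0) ->
  inner c f g = \sum_(x <- s) npi c x * f x * g x.
Proof. by move=> gs; apply: vsum_fin => // x /gs ->; rewrite mulr0. Qed.

Lemma eig x (lam : R) (u : V -> R) : (forall y, y \notin s -> u y = 0) -> x \in s ->
  Lap c u x = lam * u x -> \sum_(y <- s) c x y * u y = (1 - lam) * npi c x * u x.
Proof.
move=> u0 xs L.
have H : npi c x * Lap c u x = vsum (fun y => c x y * (u x - u y)) by rewrite /Lap vsum_Pscale.
rewrite (_ : (fun y => c x y * (u x - u y)) = (fun y => u x * c x y - c x y * u y)) in H; last first.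
  by apply: funext => y; ring.
rewrite vsumB ?vsumZ in H; last first.
- by apply: (sm_fin s) => y /u0 ->; rewrite mulr0.
- by apply: smZ; exact: csm.
- exact: csm.
rewrite (@vsum_fin _ _ (fun y => c x y * u y) s us) in H; last by move=> y /u0 ->; rewrite mulr0.
rewrite L -/(npi c x) in H.
have -> : \sum_(y <- s) c x y * u y = u x * npi c x - npi c x * (lam * u x) by rewrite H; ring.
ring.
Qed.

Lemma GamE x : npi c x * Gam c alpha x = vsum (fun y => c x y * (alpha x - alpha y) ^+ 2) / 2.
Proof.
rewrite /Gam /Gam2 mulrA.
rewrite (_ : (fun y => P c x y * (alpha x - alpha y) * (alpha x - alpha y)) =
   (fun y => P c x y * (alpha x - alpha y) ^+ 2)); last first.
  by apply: funext => y; rewrite expr2 mulrA.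
by rewrite vsum_Pscale.
Qed.

Lemma Wid x (u : V -> R) : (forall y, y \notin s -> u y = 0) ->
  npi c x * (u x * Lap c alpha x - 2 * Gam2 c alpha u x) =
  \sum_(y <- s) c x y * (alpha x - alpha y) * u y.
Proof.
move=> u0.
have G : npi c x * (2 * Gam2 c alpha u x) =
    vsum (fun y => c x y * ((alpha x - alpha y) * (u x - u y))).
  rewrite /Gam2 [2 * _]mulrC divfK ?pnatr_eq0 // -vsum_Pscale; congr (_ * _).
  by congr vsum; apply: funext => y; rewrite mulrA.
case: (boolP (x \in s)) => xs.
  have L : npi c x * Lap c alpha x = vsum (fun y => c x y * (alpha x - alpha y)).
    by rewrite /Lap vsum_Pscale.
  rewrite mulrBr G mulrCA L.
  rewrite (_ : (fun y => c x y * ((alpha x - alpha y) * (u x - u y))) =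
     (fun y => u x * (c x y * (alpha x - alpha y)) - c x y * (alpha x - alpha y) * u y));
    last by apply: funext => y; ring.
  rewrite vsumB ?vsumZ; last first.
  - by apply: (sm_fin s) => y /u0 ->; rewrite mulr0.
  - by apply: smZ; exact: sm_cd.
  - exact: sm_cd.
  rewrite (@vsum_fin _ _ (fun y => c x y * (alpha x - alpha y) * u y) s us);
    last by move=> y /u0 ->; rewrite mulr0.
  ring.
rewrite mulrBr G (u0 x xs) mul0r mulr0 sub0r.
rewrite (@vsum_fin _ _ (fun y => c x y * ((alpha x - alpha y) * (0 - u y))) s us);
  last by move=> y /u0 ->; rewrite subr0 !mulr0.
rewrite -sumrN; apply: eq_bigr => y _; ring.
Qed.

Definition S1 x := vsum (fun y => c x y * (alpha x - alpha y) ^+ 2).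

Lemma S1E x : x \in s ->
  \esum_(y in [set: V]) (c x y * (alpha x - alpha y) ^+ 2)%:E = (S1 x)%:E.
Proof.
move=> xs; rewrite /S1 vsum_nneg; last by move=> y; apply: mulr_ge0; [exact: c0 | exact: sqr_ge0].
apply: sm_nneg; last exact: ha.
by move=> y; apply: mulr_ge0; [exact: c0 | exact: sqr_ge0].
Qed.

Section Lam.
Variable u : V -> R.
Hypothesis u0 : forall y, y \notin s -> u y = 0.

Let G (p : V * V) := c p.1 p.2 * (alpha p.1 - alpha p.2) ^+ 2 * u p.1 ^+ 2.
Let G' (p : V * V) := c p.1 p.2 * (alpha p.1 - alpha p.2) ^+ 2 * u p.2 ^+ 2.
Let K (p : V * V) := 2 * (c p.1 p.2 * (alpha p.1 - alpha p.2) ^+ 2 * u p.1 * u p.2).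

Let G0 p : 0 <= G p.
Proof. by rewrite /G; apply: mulr_ge0; [apply: mulr_ge0; [exact: c0 | exact: sqr_ge0] | exact: sqr_ge0]. Qed.
Let G'0 p : 0 <= G' p.
Proof. by rewrite /G'; apply: mulr_ge0; [apply: mulr_ge0; [exact: c0 | exact: sqr_ge0] | exact: sqr_ge0]. Qed.

Let esumG : \esum_(p in [set: V * V]) (G p)%:E = (\sum_(x <- s) u x ^+ 2 * S1 x)%:E.
Proof.
have -> : \esum_(p in [set: V * V]) (G p)%:E =
    \esum_(x in [set: V]) \esum_(y in [set: V]) (G (x, y))%:E.
  rewrite esum_esum; last by move=> i j _ _; rewrite lee_fin.
  have -> : [set: V] `*`` (fun _ => [set: V]) = [set: V * V].
    by apply/seteqP; split => // -[x y].
  by apply: eq_esum => -[x y].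
rewrite (esum_fin_supp us); first last.
- move=> x xs; apply: esum1 => y _.
  by rewrite /G /= (u0 _ xs) expr0n /= mulr0.
- by move=> x; apply: esum_ge0 => y _; rewrite lee_fin.
rewrite -sumEFin big_seq [RHS]big_seq; apply: eq_bigr => x xs.
rewrite /G /=.
under eq_esum do rewrite mulrC.
rewrite esumZ ?sqr_ge0 //; last by move=> y; apply: mulr_ge0; [exact: c0 | exact: sqr_ge0].
by rewrite S1E.
Qed.

Let smG : sm G.
Proof.
rewrite /sm /summable.
rewrite (@eq_esum _ _ _ _ (fun p => (G p)%:E)); last by move=> p _; rewrite /= ger0_norm.
by rewrite esumG ltry.
Qed.

Let vsumG : vsum G = \sum_(x <- s) u x ^+ 2 * S1 x.
Proof. by rewrite vsum_nneg // esumG. Qed.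

Let esumG' : \esum_(p in [set: V * V]) (G' p)%:E = \esum_(p in [set: V * V]) (G p)%:E.
Proof.
rewrite (reindex_esum [set: V * V] [set: V * V] (fun p => (p.2, p.1))).
  apply: eq_esum => -[x y] _; rewrite /G /G' /= csym; congr (_ * _ * _)%:E.
  ring.
rewrite setTT_bijective; exists (fun p => (p.2, p.1)); by case.
Qed.

Let smG' : sm G'.
Proof.
rewrite /sm /summable.
rewrite (@eq_esum _ _ _ _ (fun p => (G' p)%:E)); last by move=> p _; rewrite /= ger0_norm.
by rewrite esumG' esumG ltry.
Qed.

Let vsumG' : vsum G' = \sum_(x <- s) u x ^+ 2 * S1 x.
Proof. by rewrite vsum_nneg // esumG' esumG. Qed.

Let Ksupp p : p \notin [seq (x, y) | x <- s, y <- s] -> K p = 0.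
Proof.
case: p => x y /= H.
case: (boolP (x \in s)) => xs; last by rewrite /K /= (u0 _ xs) !mulr0 mul0r mulr0.
case: (boolP (y \in s)) => ys; last by rewrite /K /= (u0 _ ys) !mulr0.
by move: H; rewrite (allpairs_f pair xs ys).
Qed.

Let upairs : uniq [seq (x, y) | x <- s, y <- s].
Proof. by apply: allpairs_uniq => // -[? ?] [? ?]. Qed.

Lemma LamE : Lam c alpha u =
  ((\sum_(x <- s) u x ^+ 2 * S1 x) -
   \sum_(x <- s) \sum_(y <- s) c x y * (alpha x - alpha y) ^+ 2 * u x * u y) / 2.
Proof.
rewrite /Lam.
rewrite (_ : (fun p : V * V => c p.1 p.2 * (alpha p.1 - alpha p.2) ^+ 2 * (u p.1 - u p.2) ^+ 2)
   = (fun p => G p + G' p - K p)); last first.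
  by apply: funext => -[x y]; rewrite /G /G' /K /=; ring.
rewrite vsumB; first last.
- exact: sm_fin Ksupp.
- exact: smD.
rewrite vsumD // vsumG vsumG' (vsum_fin upairs Ksupp) big_allpairs /K.
rewrite [X in (_ - X) / 4](_ : _ =
   2 * \sum_(x <- s) \sum_(y <- s) c x y * (alpha x - alpha y) ^+ 2 * u x * u y); last first.
  by rewrite mulr_sumr; apply: eq_bigr => x _; rewrite mulr_sumr; apply: eq_bigr.
move: (\sum_(x <- s) u x ^+ 2 * S1 x) (\sum_(x <- s) \sum_(y <- s) _) => A B.
by field.
Qed.

End Lam.

Lemma Tid (u : V -> R) : (forall y, y \notin s -> u y = 0) ->
  inner c (Gam c alpha) (fun x => u x ^+ 2) - Lam c alpha u =
  (\sum_(x <- s) \sum_(y <- s) c x y * (alpha x - alpha y) ^+ 2 * u x * u y) / 2.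
Proof.
move=> u0; rewrite LamE // inner_fin; last by move=> x /u0 ->; rewrite expr0n.
rewrite (eq_bigr (fun x => (u x ^+ 2 * S1 x) / 2)); last first.
  by move=> x _; rewrite GamE -/(S1 x); ring.
rewrite -mulr_suml.
move: (\sum_(x <- s) u x ^+ 2 * S1 x) (\sum_(x <- s) \sum_(y <- s) _) => A B.
by field.
Qed.

Lemma sm_sum (T : eqType) (r : seq T) (F : T -> V -> R) :
  (forall t, t \in r -> sm (F t)) -> sm (fun x => \sum_(t <- r) F t x).
Proof.
elim: r => [|t r IH] H.
  by apply: (sm_fin [::]) => x _; rewrite big_nil.
under eq_fun do rewrite big_cons.
apply: smD; first by apply: H; rewrite mem_head.
by apply: IH => t' t'r; apply: H; rewrite in_cons t'r orbT.
Qed.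

Lemma Nbound (u : V -> R) : (forall y, y \notin s -> u y = 0) ->
  \sum_(x <- s) npi c x * (u x * Lap c alpha x - 2 * Gam2 c alpha u x) *
     (u x * Lap c alpha x - 2 * Gam2 c alpha u x)
  <= norm2 c (fun x => u x * Lap c alpha x - 2 * Gam2 c alpha u x).
Proof.
move=> u0; set w := fun x => u x * Lap c alpha x - 2 * Gam2 c alpha u x.
rewrite (eq_bigr (fun x => npi c x * w x * w x)) //.
have w0 x : 0 <= npi c x * w x * w x.
  by rewrite -mulrA; apply: mulr_ge0; [exact: npi_ge0 | rewrite -expr2; exact: sqr_ge0].
apply: vsum_ge_fin => //.
pose M x := \sum_(y <- s) c x y * (alpha x - alpha y) ^+ 2 * u y ^+ 2.
have M0 x : 0 <= M x.
  apply: sumr_ge0 => y _; apply: mulr_ge0; [apply: mulr_ge0; [exact: c0 | exact: sqr_ge0] | exact: sqr_ge0].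
have smM : sm M.
  rewrite /M; apply: sm_sum => y ys.
  rewrite (_ : (fun x => c x y * (alpha x - alpha y) ^+ 2 * u y ^+ 2) =
     (fun x => u y ^+ 2 * (c y x * (alpha y - alpha x) ^+ 2))); last first.
    by apply: funext => x; rewrite csym; ring.
  by apply: smZ; exact: ha.
apply: (sm_le _ smM) => x; rewrite ger0_norm //.
have W := Wid x u u0; rewrite -/(w x) in W.
have CS := CS_seq _ _ s (c x) (fun y => (alpha x - alpha y) * u y) (c0 x).
rewrite [X in X ^+ 2 <= _](eq_bigr (fun y => c x y * (alpha x - alpha y) * u y)) in CS; last by move=> y _; ring.
rewrite -W in CS.
rewrite [X in _ <= _ * X](eq_bigr (fun y => c x y * (alpha x - alpha y) ^+ 2 * u y ^+ 2)) in CS; last by move=> y _; ring.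
rewrite -/(M x) in CS.
have Sle : \sum_(y <- s) c x y <= npi c x := vsum_ge_fin us (c0 x) (csm x).
have CS2 : (npi c x * w x) ^+ 2 <= npi c x * M x.
  by apply: le_trans CS _; apply: ler_wpM2r.
have [E|nz] := eqVneq (npi c x) 0.
  by rewrite E !mul0r.
have pos : 0 < npi c x by rewrite lt0r nz npi_ge0.
rewrite -(ler_pM2l pos); apply: le_trans CS2; rewrite le_eqVlt; apply/orP; left; apply/eqP; ring.
Qed.

End Net.

Theorem lemma3p1 (R : realType) (V : countType) (c : V -> V -> R)
  (Omega : {fset V}) (lam : nat -> R) (u : nat -> V -> R) (k : nat) (alpha : V -> R) :
  is_network c ->
  dirichlet_system c Omega lam u ->
  (k < #|` Omega|)%N ->
  (forall x, x \in Omega ->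
     summable [set: V] (fun y => (c x y * (alpha x - alpha y) ^+ 2)%:E)) ->
  \sum_(i < k) (lam k - lam i) ^+ 2 *
      (inner c (Gam c alpha) (fun x => u i x ^+ 2) - Lam c alpha (u i))
  <= \sum_(i < k) (lam k - lam i) *
      norm2 c (fun x => u i x * Lap c alpha x - 2 * Gam2 c alpha (u i) x).
Proof.
move=> [c0 [csym csm]] [lamS [usupp [ueig uON]]] kn ha.
pose s := enum_fset Omega.
have us : uniq s := fset_uniq Omega.
have kn' : (k < size s)%N := kn.
have ha' : forall x, x \in s -> sm (fun y => c x y * (alpha x - alpha y) ^+ 2) := ha.
have u0 : forall i, (i < size s)%N -> forall y, y \notin s -> u i y = 0 := usupp.
have lamS' : forall i j, (i <= j < size s)%N -> lam i <= lam j := lamS.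
have csm' : forall x, sm (c x) := csm.
have ik i : (i < k)%N -> (i < size s)%N := fun h => ltn_trans h kn'.
rewrite (eq_bigr (fun i : 'I_k => (lam k - lam i) ^+ 2 *
   ((\sum_(x <- s) \sum_(y <- s) c x y * (alpha x - alpha y) ^+ 2 * u i x * u i y) / 2)));
  last first.
  by move=> i _; rewrite (@Tid R V c c0 csym csm' s alpha us ha' (u i) (u0 i (ik i (ltn_ord i)))).
apply: (le_trans (@finite_core R V s (npi c) c lam u
   (fun i x => u i x * Lap c alpha x - 2 * Gam2 c alpha (u i) x) alpha k kn' lamS' csym _ _ _)).
- move=> j x jn xs.
  exact: (@eig R V c c0 csm' s us x (lam j) (u j) (u0 j jn) xs (ueig j jn x xs)).
- move=> i j ilt jlt.
  by rewrite -(@inner_fin R V c s us (u i) (u j) (u0 j jlt)); apply: uON.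
- move=> i x ilt xs.
  exact: (@Wid R V c c0 csm' s alpha us ha' x (u i) (u0 i ilt)).
apply: ler_sum => i _; apply: ler_wpM2l.
  by rewrite subr_ge0; apply: lamS'; rewrite (ltnW (ltn_ord i)) kn'.
exact: (@Nbound R V c c0 csym csm' s alpha us ha' (u i) (u0 i (ik i (ltn_ord i)))).
Qed.
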